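(* Let $r$ be a positive integer or $\infty$. Suppose $(A,B)$ is a partition of the vertex set of a graph $G$ such that the relation $\equiv_{(A,B)}$ has $k$ equivalence classes. If $G[A]$ and $G[B]$ each have a weak $r$-guidance system of maximum outdegree at most $c$, then $G$ has a weak $r$-guidance system of maximum outdegree at most $c+k$.
   Context: All graphs are finite, simple and undirected. For a partition $(A,B)$ of $V(G)$, $u\equiv_{(A,B)}v$ means that either $u,v\in A$ and $u,v$ have the same neighbors in $B$, or $u,v\in B$ and $u,v$ have the same neighbors in $A$. A partial orientation of $G$ is a directed graph $\vec{H}$ on $V(G)$ with every $(u,v)\in E(\vec{H})$ satisfying $uv\in E(G)$. $B_{\vec{H}}(v,a)$ is the set of vertices reachable from $v$ by a directed path of length at most $a$. For a positive integer $r$, a weak $r$-guidance system is a partial orientation $\vec{H}$ such that for any distinct $u,v$ at distance $\ell\le r$ in $G$ there exist non-negative integers $a,b$ with $a+b=\ell-1$ such that $G$ has an edge between $B_{\vec{H}}(u,a)$ and $B_{\vec{H}}(v,b)$; a weak $\infty$-guidance system is a partial orientation that is a weak $r$-guidance system for every positive integer $r$. *)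

(* Defs.v *)
From mathcomp Require Import all_boot.
Set Implicit Arguments. Unset Strict Implicit. Unset Printing Implicit Defensive.

Definition simple_graph (T : finType) (e : rel T) : Prop :=
  symmetric e /\ irreflexive e.

Definition walk_len (T : finType) (e : rel T) (u v : T) (n : nat) : Prop :=
  exists p : seq T, [/\ size p = n, path e u p & last u p = v].

Definition dist_eq (T : finType) (e : rel T) (u v : T) (l : nat) : Prop :=
  walk_len e u v l /\ forall m, m < l -> ~ walk_len e u v m.

Definition partial_orientation (T : finType) (e H : rel T) : Prop :=
  forall u v, H u v -> e u v.

Definition ball (T : finType) (H : rel T) (v : T) (a : nat) : T -> Prop :=
  fun x => exists n, n <= a /\ walk_len H v x n.

Definition edge_between (T : finType) (e : rel T) (X Y : T -> Prop) : Prop :=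
  exists x y, [/\ X x, Y y & e x y].

Definition weak_guidance (T : finType) (e H : rel T) (r : nat) : Prop :=
  partial_orientation e H /\
  forall u v l, u != v -> dist_eq e u v l -> l <= r ->
    exists a b, a + b = l.-1 /\ edge_between e (ball H u a) (ball H v b).

(* r is a positive integer (Some r) or infinity (None) *)
Definition weak_guidance_gen (T : finType) (e H : rel T) (r : option nat) : Prop :=
  match r with
  | Some n => weak_guidance e H n
  | None => forall n, 0 < n -> weak_guidance e H n
  end.

Definition pos_or_inf (r : option nat) : Prop :=
  match r with Some n => 0 < n | None => True end.

Definition max_outdeg_le (T : finType) (H : rel T) (c : nat) : Prop :=
  forall u, #|[set v | H u v]| <= c.

Definition induced (T : finType) (e : rel T) (S : {set T}) : rel {x : T | x \in S} :=
  fun x y => e (val x) (val y).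

Definition equivAB (T : finType) (e : rel T) (A B : {set T}) (u v : T) : bool :=
  (([&& u \in A, v \in A & [forall w in B, e u w == e v w]]) ||
   ([&& u \in B, v \in B & [forall w in A, e u w == e v w]])).

Definition equivAB_classes (T : finType) (e : rel T) (A B : {set T}) : {set {set T}} :=
  [set [set v | equivAB e A B u v] | u : T].
Arguments induced {T} e S.

(* Main.v *)
Require Import Defs.
From mathcomp Require Import all_boot.
From Stdlib Require Import ClassicalEpsilon.
Set Implicit Arguments. Unset Strict Implicit. Unset Printing Implicit Defensive.

Definition pb (P : Prop) : bool := if excluded_middle_informative P then true else false.
Lemma pbP (P : Prop) : reflect P (pb P).
Proof. rewrite /pb; case: excluded_middle_informative => h; constructor => //. Qed.

Lemma walk0 (T : finType) (R : rel T) x y : walk_len R x y 0 <-> x = y.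
Proof.
split; first by case=> [[|? ?] [//= _ _ <-]].
by move=> ->; exists [::].
Qed.

Lemma walkS (T : finType) (R : rel T) x z n :
  walk_len R x z n.+1 <-> exists w, R x w /\ walk_len R w z n.
Proof.
split.
  case=> [[|w p] [//= [sp] /andP [xw pw] lz]].
  by exists w; split => //; exists p.
case=> w [xw [p [sp pw lz]]]; exists (w :: p); split => //=.
- by rewrite sp.
- by rewrite xw.
Qed.

Lemma walk_cat (T : finType) (R : rel T) n m x y z :
  walk_len R x y n -> walk_len R y z m -> walk_len R x z (n + m).
Proof.
elim: n x => [|n IH] x.
  by move/walk0 => ->.
move/walkS=> [w [xw wy]] yz; rewrite addSn; apply/walkS; exists w; split => //.
exact: IH.
Qed.

Lemma walk1 (T : finType) (R : rel T) x y : R x y -> walk_len R x y 1.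
Proof. by move=> xy; apply/walkS; exists y; split => //; apply/walk0. Qed.

Lemma walk_rev (T : finType) (R : rel T) : symmetric R ->
  forall n x y, walk_len R x y n -> walk_len R y x n.
Proof.
move=> sR; elim=> [|n IH] x y.
  by move/walk0 => ->; apply/walk0.
move/walkS=> [w [xw wy]]; rewrite -addn1; apply: walk_cat (IH _ _ wy) _.
by apply: walk1; rewrite sR.
Qed.

Lemma walk_map (S T : finType) (R' : rel S) (R : rel T) (f : S -> T) :
  (forall a b, R' a b -> R (f a) (f b)) ->
  forall n x y, walk_len R' x y n -> walk_len R (f x) (f y) n.
Proof.
move=> hf; elim=> [|n IH] x y.
  by move/walk0 => ->; apply/walk0.
move/walkS=> [w [xw wy]]; apply/walkS; exists (f w); split; [exact: hf | exact: IH].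
Qed.

Lemma ball_map (S T : finType) (R' : rel S) (R : rel T) (f : S -> T) :
  (forall a b, R' a b -> R (f a) (f b)) ->
  forall a x y, ball R' x a y -> ball R (f x) a (f y).
Proof. move=> hf a x y [n [na w]]; exists n; split => //; exact: walk_map w. Qed.

Lemma notB (T : finType) (A B : {set T}) x : A :&: B = set0 -> x \in A -> x \notin B.
Proof.
move=> hd xA; apply/negP => xB.
have : x \in A :&: B by rewrite inE xA xB.
by rewrite hd inE.
Qed.

Lemma AorB (T : finType) (A B : {set T}) x : A :|: B = setT -> (x \in A) || (x \in B).
Proof. move=> hc; have : x \in A :|: B by rewrite hc inE. by rewrite inE. Qed.

Lemma split_walk (T : finType) (e : rel T) (A B : {set T}) :
  A :&: B = set0 -> A :|: B = setT ->
  forall n x v, walk_len e x v n ->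
  (exists (x' v' : {x : T | x \in A}), [/\ val x' = x, val v' = v & walk_len (induced e A) x' v' n]) \/
  (exists (x' v' : {x : T | x \in B}), [/\ val x' = x, val v' = v & walk_len (induced e B) x' v' n]) \/
  exists j1 j2 a b, [/\ j1 + j2.+1 = n, walk_len e x a j1, e a b, walk_len e b v j2 &
      ((a \in A) && (b \in B)) || ((a \in B) && (b \in A))].
Proof.
move=> hd hc; elim=> [|n IH] x v.
  move/walk0 => <-; case/orP: (AorB x hc) => xS.
    by left; exists (exist _ x xS), (exist _ x xS); split => //; apply/walk0.
  by right; left; exists (exist _ x xS), (exist _ x xS); split => //; apply/walk0.
move/walkS=> [w [xw wv]].
have cross : ((x \in A) && (w \in B)) || ((x \in B) && (w \in A)) ->
  exists j1 j2 a b, [/\ j1 + j2.+1 = n.+1, walk_len e x a j1, e a b, walk_len e b v j2 &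
      ((a \in A) && (b \in B)) || ((a \in B) && (b \in A))].
  by move=> h; exists 0, n, x, w; split => //; apply/walk0.
have ext : (exists j1 j2 a b, [/\ j1 + j2.+1 = n, walk_len e w a j1, e a b, walk_len e b v j2 &
      ((a \in A) && (b \in B)) || ((a \in B) && (b \in A))]) ->
  exists j1 j2 a b, [/\ j1 + j2.+1 = n.+1, walk_len e x a j1, e a b, walk_len e b v j2 &
      ((a \in A) && (b \in B)) || ((a \in B) && (b \in A))].
  case=> j1 [j2 [a [b [hj wa ab bv hs]]]]; exists j1.+1, j2, a, b; split => //.
    by rewrite addSn hj.
  by apply/walkS; exists w.
case/orP: (AorB x hc) => xS; case/orP: (AorB w hc) => wS.
- case: (IH _ _ wv) => [[w' [v' [ew ev wl]]]|[[w' [v' [ew ev wl]]]|hh]].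
  + left; exists (exist _ x xS), v'; split => //; apply/walkS; exists w'; split => //.
    by rewrite /induced /= ew.
  + by move: (valP w'); rewrite ew (negbTE (notB hd wS)).
  + by right; right; apply: ext.
- by right; right; apply: cross; rewrite xS wS.
- by right; right; apply: cross; rewrite xS wS orbT.
- case: (IH _ _ wv) => [[w' [v' [ew ev wl]]]|[[w' [v' [ew ev wl]]]|hh]].
  + have hd' : B :&: A = set0 by rewrite setIC.
    by move: (valP w'); rewrite ew (negbTE (notB hd' wS)).
  + right; left; exists (exist _ x xS), v'; split => //; apply/walkS; exists w'; split => //.
    by rewrite /induced /= ew.
  + by right; right; apply: ext.
Qed.

Definition reachZ (T : finType) (e : rel T) (Z : {set T}) x d :=
  exists z, z \in Z /\ walk_len e x z d.
Definition good (T : finType) (e : rel T) (Z : {set T}) x w :=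
  e x w /\ exists d, reachZ e Z w d /\ forall m, m <= d -> ~ reachZ e Z x m.
Definition nxt (T : finType) (e : rel T) (Z : {set T}) x :=
  odflt x [pick w | pb (good e Z x w)].
Definition lift (T : finType) (S : {set T}) (HS : rel {x : T | x \in S}) (u v : T) :=
  pb (exists u' v', [/\ val u' = u, val v' = v & HS u' v']).
Definition tow (T : finType) (e : rel T) (A B : {set T}) (u v : T) :=
  [exists Z in equivAB_classes e A B, pb (good e Z u v) && (v == nxt e Z u)].
Definition Hn (T : finType) (e : rel T) (A B : {set T})
  (HA : rel {x : T | x \in A}) (HB : rel {x : T | x \in B}) : rel T :=
  fun u v => [|| lift HA u v, lift HB u v | tow e A B u v].

Lemma nxt_good (T : finType) (e : rel T) Z x :
  (exists w, good e Z x w) -> good e Z x (nxt e Z x).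
Proof.
rewrite /nxt; case: pickP => [w /pbP //| none] [w gw].
by move: (none w); move/pbP: gw => ->.
Qed.

Lemma reach (T : finType) (e : rel T) (A B : {set T}) (HA : rel {x : T | x \in A}) (HB : rel {x : T | x \in B}) Z :
  Z \in equivAB_classes e A B ->
  forall d x, reachZ e Z x d -> (forall m, m < d -> ~ reachZ e Z x m) ->
  exists z, z \in Z /\ ball (Hn e HA HB) x d z.
Proof.
move=> ZC; elim=> [|d IH] x.
  move=> [z [zZ /walk0 xz]] _; exists z; split => //; exists 0; split => //.
  by apply/walk0.
move=> [z [zZ /walkS [w [xw wz]]]] hmin.
have gw : good e Z x w.
  split => //; exists d; split; first by exists z.
  by move=> m md; apply: hmin; rewrite ltnS.
have [xw0 [d' [[z' [z'Z w0z']] hm']]] := nxt_good (ex_intro _ w gw).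
set w0 := nxt e Z x in xw0 w0z' hm'.
have dd : d' = d.
  apply/eqP; rewrite eqn_leq; apply/andP; split.
    rewrite -ltnS; case: (ltnP d' d.+1) => // h.
    by case: (hm' d.+1 h); exists z; split => //; apply/walkS; exists w.
  case: (leqP d d') => // h; case: (hmin d'.+1 _); first by rewrite ltnS.
  by exists z'; split => //; apply/walkS; exists w0.
subst d'.
have [z1 [z1Z [n [nd wl]]]] : exists z, z \in Z /\ ball (Hn e HA HB) w0 d z.
  apply: IH; first by exists z'.
  move=> m md [y [yZ wy]]; apply: (hmin m.+1); first by rewrite ltnS.
  by exists y; split => //; apply/walkS; exists w0.
exists z1; split => //; exists n.+1; split => //; apply/walkS; exists w0; split => //.
apply/orP; right; apply/orP; right; apply/existsP; exists Z; rewrite ZC /=.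
apply/andP; split => //; apply/pbP; exact: nxt_good (ex_intro _ w gw).
Qed.

Lemma eqv_side (T : finType) (e : rel T) (A B : {set T}) a x :
  A :&: B = set0 -> equivAB e A B a x ->
  (a \in A -> x \in A /\ forall w, w \in B -> e a w = e x w) /\
  (a \in B -> x \in B /\ forall w, w \in A -> e a w = e x w).
Proof.
move=> hd; case/orP => /and3P [aS xS /forallP F]; split => h.
- by split => // w wB; apply/eqP; move: (F w); rewrite wB.
- by move: (notB hd aS); rewrite h.
- have hd' : B :&: A = set0 by rewrite setIC.
  by move: (notB hd' aS); rewrite h.
- by split => // w wB; apply/eqP; move: (F w); rewrite wB.
Qed.

Lemma cross (T : finType) (e : rel T) (A B : {set T}) a b x y :
  A :&: B = set0 -> symmetric e ->
  ((a \in A) && (b \in B)) || ((a \in B) && (b \in A)) -> e a b ->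
  equivAB e A B a x -> equivAB e A B b y -> e x y.
Proof.
move=> hd sy hs ab /(eqv_side hd) [ha1 ha2] /(eqv_side hd) [hb1 hb2].
case/orP: hs => /andP [aS bS].
- have [xA ex] := ha1 aS; have [yB ey] := hb2 bS.
  by rewrite -ex // sy -ey // sy.
- have [xB ex] := ha2 aS; have [yA ey] := hb1 bS.
  by rewrite -ex // sy -ey // sy.
Qed.

Lemma eqv_refl (T : finType) (e : rel T) (A B : {set T}) a :
  A :|: B = setT -> equivAB e A B a a.
Proof.
move=> hc; rewrite /equivAB; case/orP: (AorB a hc) => ->; rewrite /=.
  by apply/orP; left; apply/forallP => w; apply/implyP.
by rewrite orbC; apply/orP; left; apply/forallP => w; apply/implyP.
Qed.

Lemma lift_H (T : finType) (e : rel T) (A B : {set T})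
  (HA : rel {x : T | x \in A}) (HB : rel {x : T | x \in B}) :
  (forall a b, HA a b -> Hn e HA HB (val a) (val b)) /\
  (forall a b, HB a b -> Hn e HA HB (val a) (val b)).
Proof.
split => a b h.
  by apply/orP; left; apply/pbP; exists a, b.
by apply/orP; right; apply/orP; left; apply/pbP; exists a, b.
Qed.

Lemma same_side (T : finType) (e : rel T) (S : {set T}) (HS : rel {x : T | x \in S})
  (H : rel T) n u v l (u' v' : {x : T | x \in S}) :
  (forall a b, HS a b -> H (val a) (val b)) ->
  weak_guidance (induced e S) HS n ->
  u != v -> dist_eq e u v l -> l <= n ->
  val u' = u -> val v' = v -> walk_len (induced e S) u' v' l ->
  exists a b, a + b = l.-1 /\ edge_between e (ball H u a) (ball H v b).
Proof.
move=> hl [_ G] uv [_ dmin] ln eu ev wl.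
have u'v' : u' != v'.
  by apply/negP => /eqP E; move: uv; rewrite -eu -ev E eqxx.
have dd : dist_eq (induced e S) u' v' l.
  split => // m ml wm; apply: (dmin m ml); rewrite -eu -ev.
  exact: (walk_map (R := e) (f := val) (fun a b h => h) wm).
have [a [b [ab [x [y [bx byy xy]]]]]] := G u' v' l u'v' dd ln.
exists a, b; split => //; exists (val x), (val y); split => //.
- by rewrite -eu; exact: ball_map hl _ _ _ bx.
- by rewrite -ev; exact: ball_map hl _ _ _ byy.
Qed.

Lemma core (T : finType) (e : rel T) (A B : {set T})
  (HA : rel {x : T | x \in A}) (HB : rel {x : T | x \in B}) n :
  simple_graph e -> A :&: B = set0 -> A :|: B = setT ->
  weak_guidance (induced e A) HA n -> weak_guidance (induced e B) HB n ->
  weak_guidance e (Hn e HA HB) n.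
Proof.
move=> [sy irr] hd hc GA GB; have [lA lB] := lift_H e HA HB.
split.
  move=> u v; case/or3P.
  - move/pbP=> [u' [v' [<- <- h]]]; exact: (proj1 GA) h.
  - move/pbP=> [u' [v' [<- <- h]]]; exact: (proj1 GB) h.
  - by case/existsP=> Z /andP [_ /andP [/pbP [] ]].
move=> u v l uv dl ln.
have [[p [sp pp lp]] dmin] := dl.
have wl : walk_len e u v l by exists p.
case: (split_walk hd hc wl) => [[u' [v' [eu ev w']]]|[[u' [v' [eu ev w']]]|]].
- exact: same_side lA GA uv dl ln eu ev w'.
- exact: same_side lB GB uv dl ln eu ev w'.
move=> [j1 [j2 [a [b [hl wa ab bv hs]]]]].
set X := [set w | equivAB e A B a w].
set Y := [set w | equivAB e A B b w].
have XC : X \in equivAB_classes e A B by apply/imsetP; exists a.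
have YC : Y \in equivAB_classes e A B by apply/imsetP; exists b.
have aX : a \in X by rewrite inE eqv_refl.
have bY : b \in Y by rewrite inE eqv_refl.
have cr : forall x y, x \in X -> y \in Y -> e x y.
  by move=> x y; rewrite !inE; apply: cross hd sy hs ab.
have [z1 [z1X b1]] : exists z, z \in X /\ ball (Hn e HA HB) u j1 z.
  apply: (reach HA HB XC); first by exists a.
  move=> m mj [z [zX wz]]; apply: (dmin (m + (1 + j2))).
    by rewrite -hl add1n ltn_add2r.
  apply: walk_cat wz _; apply: walk_cat (walk1 (cr _ _ zX bY)) bv.
have [z2 [z2Y b2]] : exists z, z \in Y /\ ball (Hn e HA HB) v j2 z.
  apply: (reach HA HB YC); first by exists b; split => //; exact: walk_rev sy _ _ _ bv.
  move=> m mj [z [zY wz]]; apply: (dmin (j1 + (1 + m))).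
    by rewrite -hl add1n ltn_add2l ltnS.
  apply: walk_cat wa _; apply: walk_cat (walk1 (cr _ _ aX zY)) _.
  exact: walk_rev sy _ _ _ wz.
exists j1, j2; split; first by rewrite -hl addnS.
by exists z1, z2; split => //; apply: cr.
Qed.

Lemma outdeg (T : finType) (e : rel T) (A B : {set T})
  (HA : rel {x : T | x \in A}) (HB : rel {x : T | x \in B}) c k :
  A :&: B = set0 -> A :|: B = setT -> #|equivAB_classes e A B| = k ->
  max_outdeg_le HA c -> max_outdeg_le HB c -> max_outdeg_le (Hn e HA HB) (c + k).
Proof.
move=> hd hc hk dA dB u.
have hd' : B :&: A = set0 by rewrite setIC.
set N := [set nxt e Z u | Z in equivAB_classes e A B].
have hN : #|N| <= k by rewrite -hk leq_imset_card.
have towN : forall v, tow e A B u v -> v \in N.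
  move=> v /existsP [Z /andP [ZC /andP [_ /eqP ->]]]; by apply/imsetP; exists Z.
case/orP: (AorB u hc) => uS.
- set u0 : {x : T | x \in A} := exist _ u uS.
  have sub : [set v | Hn e HA HB u v] \subset (val @: [set v' | HA u0 v']) :|: N.
    apply/subsetP => v; rewrite inE; case/or3P.
    + move/pbP=> [u' [v' [eu <- h]]]; rewrite inE; apply/orP; left.
      apply/imsetP; exists v' => //; rewrite inE.
      by have -> : u0 = u' by apply: val_inj; rewrite eu.
    + move/pbP=> [u' [v' [eu _ _]]]; move: (valP u'); rewrite eu.
      by rewrite (negbTE (notB hd uS)).
    + by move/towN => vN; rewrite inE vN orbT.
  apply: leq_trans (subset_leq_card sub) _; apply: leq_trans (leq_card_setU _ _) _.
  apply: leq_add => //; apply: leq_trans (leq_imset_card _ _) _; exact: dA.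
- set u0 : {x : T | x \in B} := exist _ u uS.
  have sub : [set v | Hn e HA HB u v] \subset (val @: [set v' | HB u0 v']) :|: N.
    apply/subsetP => v; rewrite inE; case/or3P.
    + move/pbP=> [u' [v' [eu _ _]]]; move: (valP u'); rewrite eu.
      by rewrite (negbTE (notB hd' uS)).
    + move/pbP=> [u' [v' [eu <- h]]]; rewrite inE; apply/orP; left.
      apply/imsetP; exists v' => //; rewrite inE.
      by have -> : u0 = u' by apply: val_inj; rewrite eu.
    + by move/towN => vN; rewrite inE vN orbT.
  apply: leq_trans (subset_leq_card sub) _; apply: leq_trans (leq_card_setU _ _) _.
  apply: leq_add => //; apply: leq_trans (leq_imset_card _ _) _; exact: dB.
Qed.

Theorem lemma33 (T : finType) (e : rel T) (r : option nat) (A B : {set T})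
    (k c : nat) :
  simple_graph e -> pos_or_inf r ->
  A :&: B = set0 -> A :|: B = setT ->
  #|equivAB_classes e A B| = k ->
  (exists HA : rel {x : T | x \in A},
      weak_guidance_gen (induced e A) HA r /\ max_outdeg_le HA c) ->
  (exists HB : rel {x : T | x \in B},
      weak_guidance_gen (induced e B) HB r /\ max_outdeg_le HB c) ->
  exists H : rel T, weak_guidance_gen e H r /\ max_outdeg_le H (c + k).
Proof.
move=> sg _ hd hc hk [HA [gA dA]] [HB [gB dB]].
exists (Hn e HA HB); split; last exact: outdeg hd hc hk dA dB.
case: r gA gB => [n|] gA gB /=; first exact: core sg hd hc gA gB.
by move=> n n0; apply: core sg hd hc (gA n n0) (gB n n0).
Qed.
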